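(* Let $(\mathcal W_s)_{s\in\mathcal S}$ be a strict HN-stratification of $\mathcal G$ and let $M\in\mathcal G$. Suppose $M=M_0\supsetneq M_1\supsetneq\cdots\supsetneq M_m=0$ and $M=N_0\supsetneq N_1\supsetneq\cdots\supsetneq N_n=0$ are two chains of strict subobjects of $M$ with $M_{k-1}/M_k\in\mathcal W_{s_k}$, $s_1>s_2>\cdots>s_m$, and $N_{j-1}/N_j\in\mathcal W_{u_j}$, $u_1>u_2>\cdots>u_n$. Then $m=n$, and $s_k=u_k$ and $M_k=N_k$ for all $k$.
   Context: Let $\Lambda$ be a finite dimensional algebra over a field and $\mathrm{mod}\text-\Lambda$ the category of finitely generated right $\Lambda$-modules. Fix a torsion class $\mathcal G\subseteq\mathrm{mod}\text-\Lambda$ (closed under isomorphisms, extensions and quotients). For $B\in\mathcal G$, a subobject of $B$ is a submodule in $\mathcal G$; a subobject $A\subseteq B$ is strict if $A\cap B'\in\mathcal G$ for every subobject $B'$ of $B$; a strict quotient of $B$ is $B/A$ with $A$ a strict subobject. A strict morphism is a homomorphism $f:A\to B$ with $A,B\in\mathcal G$ such that $\ker f\in\mathcal G$ is a strict subobject of $A$ and $\operatorname{im} f$ is a strict subobject of $B$. A pseudo-wide subcategory of $\mathcal G$ is a nonempty class $\mathcal W\subseteq\mathcal G$ such that for every strict morphism $f:A\to B$ with $A,B\in\mathcal W$, $\ker f,\operatorname{im} f,\operatorname{coker} f\in\mathcal W$, and $\mathcal W$ is closed under strict extensions (if $0\to A\to B\to C\to 0$ is exact with $A$ a strict subobject of $B$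 and $A,C\in\mathcal W$, then $B\in\mathcal W$). A strict HN-stratification of $\mathcal G$ is a family $(\mathcal W_s)_{s\in\mathcal S}$ of pseudo-wide subcategories indexed by a totally ordered set $\mathcal S$ such that: (1) if $s_0<s_1$, every strict morphism $X\to Y$ with $X\in\mathcal W_{s_0}$, $Y\in\mathcal W_{s_1}$ is zero; (2) every $M\in\mathcal G$ has a chain of strict subobjects $M=M_0\supseteq M_1\supseteq\cdots\supseteq M_m=0$ with $M_{k-1}/M_k\in\mathcal W_{s_k}$ and $s_1>s_2>\cdots>s_m$. *)

(* Defs.v *)
(* Right modules over a finite-dimensional algebra L over a
   field F are modelled as finite-dimensional matrix representations:
   the module is the space of row vectors 'rV_(mdim X), with v . a := v *m act a. *)
From HB Require Import structures.
From mathcomp Require Import all_boot all_order all_algebra all_field.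
Unset Printing Implicit Defensive.
Import Order.TTheory GRing.Theory.
Local Open Scope ring_scope.

Section Modules.
Variables (F : fieldType) (L : falgType F).

Record module := Module {
  mdim : nat;
  act : L -> 'M[F]_mdim;
  act_linear : forall (c : F) (a b : L), act (c *: a + b) = c *: act a + act b;
  act_mul : forall a b : L, act (a * b) = act a *m act b;
  act_one : act 1 = 1%:M
}.

Definition hom (X Y : module) (f : 'M[F]_(mdim X, mdim Y)) : Prop :=
  forall a : L, act X a *m f = f *m act Y a.

Definition iso (X Y : module) : Prop :=
  exists (f : 'M[F]_(mdim X, mdim Y)) (g : 'M[F]_(mdim Y, mdim X)),
    [/\ hom X Y f, hom Y X g, f *m g = 1%:M & g *m f = 1%:M].

Definition submodule (X : module) m (U : 'M[F]_(m, mdim X)) : Prop :=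
  forall a : L, (U *m act X a <= U)%MS.

(* For submodules U <= V of X: the subquotient V/U is (isomorphic to) a
   module of the class C.  Witness: a map g defined on V, L-linear on V,
   surjective from V onto Y, with kernel (inside V) exactly U. *)
Definition subquot (C : module -> Prop) (X : module) m1 m2
    (V : 'M[F]_(m1, mdim X)) (U : 'M[F]_(m2, mdim X)) : Prop :=
  exists Y : module, C Y /\
    exists g : 'M[F]_(mdim X, mdim Y),
      [/\ forall a : L, V *m (act X a *m g) = V *m (g *m act Y a),
          (1%:M <= V *m g)%MS &
          (V :&: kermx g == U)%MS].

Definition subC (C : module -> Prop) (X : module) m (U : 'M[F]_(m, mdim X)) :=
  subquot C X m (mdim X) U (0 : 'M[F]_(mdim X)).

Definition quotC (C : module -> Prop) (X : module) m (U : 'M[F]_(m, mdim X)) :=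
  subquot C X (mdim X) m (1%:M : 'M[F]_(mdim X)) U.

Definition iso_closed (C : module -> Prop) : Prop :=
  forall X Y : module, iso X Y -> C X -> C Y.

Definition torsion_class (G : module -> Prop) : Prop :=
  [/\ iso_closed G,
      (forall (X : module) m (U : 'M[F]_(m, mdim X)),
          G X -> submodule X m U -> quotC G X m U) &
      (forall (X : module) m (U : 'M[F]_(m, mdim X)),
          submodule X m U -> subC G X m U -> quotC G X m U -> G X)].

Definition subobject (G : module -> Prop) (B : module) m (U : 'M[F]_(m, mdim B)) :=
  submodule B m U /\ subC G B m U.

Definition strict_sub (G : module -> Prop) (B : module) m (U : 'M[F]_(m, mdim B)) :=
  [/\ G B, subobject G B m U &
      forall m' (V : 'M[F]_(m', mdim B)), subobject G B m' V -> subC G B (mdim B) (U :&: V)%MS].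

Definition strict_morph (G : module -> Prop) (X Y : module)
    (f : 'M[F]_(mdim X, mdim Y)) : Prop :=
  [/\ G X, G Y, hom X Y f, strict_sub G X (mdim X) (kermx f) & strict_sub G Y (mdim X) f].

Definition pseudo_wide (G W : module -> Prop) : Prop :=
  [/\ exists X, W X,
      forall X, W X -> G X,
      iso_closed W,
      (forall (X Y : module) (f : 'M[F]_(mdim X, mdim Y)),
          W X -> W Y -> strict_morph G X Y f ->
          [/\ subC W X (mdim X) (kermx f), subC W Y (mdim X) f & quotC W Y (mdim X) f]) &
      (forall (X : module) m (U : 'M[F]_(m, mdim X)),
          strict_sub G X m U -> subC W X m U -> quotC W X m U -> W X)].

Definition HN_chain (G : module -> Prop) (d : Order.disp_t) (S : orderType d)
    (W : S -> module -> Prop) (M : module) (m : nat)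
    (Ms : nat -> 'M[F]_(mdim M)) (s : nat -> S) : Prop :=
  [/\ (Ms 0 == 1%:M)%MS,
      (Ms m == (0 : 'M[F]_(mdim M)))%MS,
      (forall k, (k <= m)%N -> strict_sub G M (mdim M) (Ms k)),
      (forall k, (0 < k <= m)%N -> (Ms k <= Ms k.-1)%MS /\
                                   subquot (W (s k)) M (mdim M) (mdim M) (Ms k.-1) (Ms k)) &
      (forall k, (0 < k < m)%N -> (s k.+1 < s k)%O)].

Definition strict_HN_stratification (G : module -> Prop) (d : Order.disp_t)
    (S : orderType d) (W : S -> module -> Prop) : Prop :=
  [/\ forall s, pseudo_wide G (W s),
      (forall (s0 s1 : S) (X Y : module) (f : 'M[F]_(mdim X, mdim Y)),
          (s0 < s1)%O -> W s0 X -> W s1 Y -> strict_morph G X Y f -> f = 0) &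
      (forall M, G M -> exists m Ms s, HN_chain G d S W M m Ms s)].

End Modules.

Arguments module {F}.
Arguments mdim {F L}.
Arguments act {F L}.
Arguments hom {F L X Y}.
Arguments iso {F L}.
Arguments submodule {F L X m}.
Arguments subquot {F L} C X {m1 m2}.
Arguments subC {F L} C X {m}.
Arguments quotC {F L} C X {m}.
Arguments iso_closed {F L}.
Arguments torsion_class {F L}.
Arguments subobject {F L} G B {m}.
Arguments strict_sub {F L} G B {m}.
Arguments strict_morph {F L} G {X Y}.
Arguments pseudo_wide {F L}.
Arguments HN_chain {F L} G {d S} W M.
Arguments strict_HN_stratification {F L} G {d S} W.

(* Main.v *)
Require Import Defs.
From HB Require Import structures.
From mathcomp Require Import all_boot all_order all_algebra all_field.
From mathcomp Require Import zify.
Import Order.TTheory GRing.Theory.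
Local Open Scope ring_scope.

Set Implicit Arguments.
Unset Strict Implicit.
Section Aux.
Variables (F : fieldType) (L : falgType F).
Implicit Types (X Y Z : module L).

Definition cp X Y m (V : 'M[F]_(m, mdim X)) (g : 'M[F]_(mdim X, mdim Y)) :=
  forall a, (V <= kermx (act X a *m g - g *m act Y a))%MS.
Arguments cp : clear implicits.

Lemma cpE X Y m (V : 'M[F]_(m, mdim X)) g :
  (forall a, V *m (act X a *m g) = V *m (g *m act Y a)) <-> cp X Y m V g.
Proof.
split=> H a; first by apply/sub_kermxP; rewrite mulmxBr H subrr.
by apply/eqP; rewrite -subr_eq0 -mulmxBr; apply/eqP/sub_kermxP.
Qed.

Lemma cpS X Y m m' (V : 'M[F]_(m, mdim X)) (W : 'M[F]_(m', mdim X)) g :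
  cp X Y m V g -> (W <= V)%MS -> cp X Y m' W g.
Proof. by move=> H s a; apply: submx_trans s (H a). Qed.

Lemma cpM X Y m m' (V : 'M[F]_(m, mdim X)) (W : 'M[F]_(m', mdim X)) g a :
  cp X Y m V g -> (W <= V)%MS -> W *m act X a *m g = W *m g *m act Y a.
Proof. by move=> H s; rewrite -!mulmxA; exact: (proj2 (cpE _ _) (cpS H s) a). Qed.

Lemma subquotP C X m1 m2 (V : 'M[F]_(m1, mdim X)) (U : 'M[F]_(m2, mdim X)) :
  subquot C X V U <-> exists Y, C Y /\ exists g,
     [/\ cp X Y m1 V g, (1%:M <= V *m g)%MS & (V :&: kermx g == U)%MS].
Proof.
split=> [[Y [CY [g [h1 h2 h3]]]]|[Y [CY [g [h1 h2 h3]]]]]; exists Y; split=> //;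
  exists g; split=> //; by apply/cpE.
Qed.

Section Ker.
Variables (X Y : module L) (m1 m2 : nat) (V : 'M[F]_(m1, mdim X))
  (U : 'M[F]_(m2, mdim X)) (g : 'M[F]_(mdim X, mdim Y)).
Hypothesis hk : (V :&: kermx g == U)%MS.

Lemma kerE m (W : 'M[F]_(m, mdim X)) : (W <= V)%MS -> W *m g = 0 -> (W <= U)%MS.
Proof.
move=> s e; case/andP: hk => h _; apply: submx_trans h.
by rewrite sub_capmx s; apply/sub_kermxP.
Qed.

Lemma kerUV : (U <= V)%MS.
Proof. by case/andP: hk => _ h; apply: submx_trans h (capmxSl _ _). Qed.

Lemma kerUk : (U <= kermx g)%MS.
Proof. by case/andP: hk => _ h; apply: submx_trans h (capmxSr _ _). Qed.

Lemma kerUg : U *m g = 0.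
Proof. exact/sub_kermxP/kerUk. Qed.

Lemma keyD m (W : 'M[F]_(m, mdim X)) : (W <= V)%MS ->
  (W *m g *m pinvmx (V *m g) *m V - W <= U)%MS.
Proof.
move=> s; apply: kerE.
  by rewrite addmx_sub // ?submxMl // eqmx_opp.
by rewrite mulmxBl -(mulmxA _ V g) mulmxKpV ?subrr // submxMr.
Qed.

Lemma keyid p (h : 'M[F]_(mdim X, p)) m (W : 'M[F]_(m, mdim X)) :
  (U <= kermx h)%MS -> (W <= V)%MS ->
  W *m g *m pinvmx (V *m g) *m V *m h = W *m h.
Proof.
move=> sh s; apply/eqP; rewrite -subr_eq0 -mulmxBl; apply/eqP/sub_kermxP.
exact: submx_trans (keyD s) sh.
Qed.

Lemma liftS m m' (W : 'M[F]_(m, mdim X)) (T : 'M[F]_(m', mdim Y)) :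
  (W <= V)%MS -> (W *m g <= T)%MS ->
  (W <= T *m pinvmx (V *m g) *m V + U)%MS.
Proof.
move=> s sT.
have -> : W = W *m g *m pinvmx (V *m g) *m V - (W *m g *m pinvmx (V *m g) *m V - W).
  by rewrite opprB addrC subrK.
apply: addmx_sub_adds; first by rewrite !submxMr.
by rewrite eqmx_opp keyD.
Qed.

Lemma liftG m m' (W : 'M[F]_(m, mdim X)) (T : 'M[F]_(m', mdim Y)) :
  (T <= V *m g)%MS ->
  (W <= T *m pinvmx (V *m g) *m V + U)%MS -> (W *m g <= T)%MS.
Proof.
move=> sT /sub_addsmxP[[u1 u2] ->] /=.
have e : T *m pinvmx (V *m g) *m V *m g = T by rewrite -mulmxA mulmxKpV.
by rewrite mulmxDl -(mulmxA u2) kerUg mulmx0 addr0 -mulmxA e submxMl.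
Qed.
End Ker.


Lemma sqE C X m1 m2 m1' m2' (V : 'M[F]_(m1, mdim X)) (U : 'M[F]_(m2, mdim X))
  (V' : 'M[F]_(m1', mdim X)) (U' : 'M[F]_(m2', mdim X)) :
  subquot C X V U -> (V == V')%MS -> (U == U')%MS -> subquot C X V' U'.
Proof.
move/subquotP=> [Y [CY [g [hc hs hk]]]] /eqmxP eV /eqmxP eU.
apply/subquotP; exists Y; split=> //; exists g; split.
- by apply: cpS hc _; rewrite eV.
- by rewrite -(eqmxMr g eV).
apply/andP; split.
  rewrite -eU; apply: (kerE hk); first by rewrite eV capmxSl.
  exact/sub_kermxP/capmxSr.
by rewrite -eU sub_capmx -eV (kerUV hk) (kerUk hk).
Qed.

Lemma TRf C X Y m1 m2 (V : 'M[F]_(m1, mdim X)) (U : 'M[F]_(m2, mdim X))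
  (g : 'M[F]_(mdim X, mdim Y)) p2 p1 (T2 : 'M[F]_(p2, mdim Y)) (T1 : 'M[F]_(p1, mdim Y)) :
  cp X Y m1 V g -> (1%:M <= V *m g)%MS -> (V :&: kermx g == U)%MS -> submodule U ->
  subquot C Y T2 T1 ->
  subquot C X (T2 *m pinvmx (V *m g) *m V + U)%MS (T1 *m pinvmx (V *m g) *m V + U)%MS.
Proof.
move=> hc hs hk hU /subquotP[Y' [CY' [h [hc' hs' hk']]]].
set Q := pinvmx (V *m g).
have eT p (T : 'M[F]_(p, mdim Y)) : T *m Q *m V *m g = T.
  by rewrite -mulmxA mulmxKpV // (submx_trans (submx1 T) hs).
apply/subquotP; exists Y'; split=> //; exists (g *m h); split.
- move=> a; rewrite addsmx_sub; apply/andP; split; apply/sub_kermxP.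
    rewrite mulmxBr; apply/eqP; rewrite subr_eq0; apply/eqP.
    set W := T2 *m Q *m V.
    have sW : (W <= V)%MS by apply: submxMl.
    have eW : W *m g = T2 by apply: eT.
    rewrite (mulmxA (act X a)) !(mulmxA W) (cpM a hc sW) eW.
    by rewrite (cpM a hc' (submx_refl _)).
  rewrite mulmxBr (mulmxA (act X a)) !(mulmxA U) (kerUg hk).
  by rewrite (sub_kermxP (submx_trans (hU a) (kerUk hk))) !mul0mx subrr.
- apply: submx_trans hs' _.
  have -> : T2 *m h = T2 *m Q *m V *m (g *m h) by rewrite mulmxA eT.
  by apply: submxMr; apply: addsmxSl.
apply/andP; split.
  case/sub_addsmxP: (capmxSl (T2 *m Q *m V + U)%MS (kermx (g *m h))) => [[u1 u2] /= eW].
  have Wg : ((T2 *m Q *m V + U)%MS :&: kermx (g *m h))%MS *m g = u1 *m T2.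
    by rewrite eW mulmxDl -(mulmxA u2) (kerUg hk) mulmx0 addr0 -mulmxA eT.
  have Wh : u1 *m T2 *m h = 0.
    by rewrite -Wg -mulmxA; apply/sub_kermxP/capmxSr.
  have sT : (u1 *m T2 <= T1)%MS by apply: (kerE hk'); rewrite ?submxMl.
  rewrite eW; apply: addmx_sub_adds; last exact: submxMl.
  by rewrite mulmxA (mulmxA u1); apply: submxMr; apply: submxMr.
rewrite sub_capmx; apply/andP; split.
  apply: addsmxS => //; apply: submxMr; apply: submxMr; exact: kerUV hk'.
rewrite addsmx_sub; apply/andP; split; apply/sub_kermxP.
  by rewrite mulmxA eT (kerUg hk').
by rewrite mulmxA (kerUg hk) mul0mx.
Qed.

Lemma TRb C X Y m1 m2 (V : 'M[F]_(m1, mdim X)) (U : 'M[F]_(m2, mdim X))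
  (g : 'M[F]_(mdim X, mdim Y)) q2 q1 (V2 : 'M[F]_(q2, mdim X)) (V1 : 'M[F]_(q1, mdim X)) :
  cp X Y m1 V g -> (V :&: kermx g == U)%MS -> (U <= V1)%MS -> (V2 <= V)%MS ->
  submodule V2 -> subquot C X V2 V1 -> subquot C Y (V2 *m g) (V1 *m g).
Proof.
move=> hc hk sU sV2 hV2 /subquotP[Y' [CY' [h [hc' hs' hk']]]].
set Q := pinvmx (V *m g).
set H := Q *m V *m h.
have key q (Z : 'M[F]_(q, mdim X)) : (Z <= V2)%MS -> Z *m g *m H = Z *m h.
  move=> sZ; rewrite /H (mulmxA (Z *m g) (Q *m V) h) (mulmxA (Z *m g) Q V).
  apply: (keyid hk); first exact: submx_trans sU (kerUk hk').
  exact: submx_trans sZ sV2.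
apply/subquotP; exists Y'; split=> //; exists H; split.
- move=> a; apply/sub_kermxP.
  rewrite mulmxBr; apply/eqP; rewrite subr_eq0; apply/eqP.
  rewrite (mulmxA (V2 *m g)) -(cpM a hc sV2) key ?hV2 //.
  by rewrite (cpM a hc' (submx_refl _)) (mulmxA (V2 *m g)) key.
- by rewrite key.
apply/andP; split.
  case/submxP: (capmxSl (V2 *m g) (kermx H)) => R eK.
  rewrite eK mulmxA; apply: submxMr; apply: (kerE hk'); first exact: submxMl.
  rewrite -(key _ (R *m V2)) ?submxMl // -(mulmxA R V2 g) -eK.
  exact/sub_kermxP/capmxSr.
rewrite sub_capmx submxMr ?(kerUV hk') //=; apply/sub_kermxP.
by rewrite key ?(kerUV hk') // (kerUg hk').
Qed.

Lemma Qamb G (hG : torsion_class G) X m1 m2 q (V : 'M[F]_(m1, mdim X))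
  (U : 'M[F]_(m2, mdim X)) (U2 : 'M[F]_(q, mdim X)) :
  subquot G X V U -> (U <= U2)%MS -> (U2 <= V)%MS -> submodule U2 -> subquot G X V U2.
Proof.
case: hG => _ hq _ /subquotP[Y [GY [g [hc hs hk]]]] sU sU2 hU2.
have sm : submodule (U2 *m g).
  by move=> a; rewrite -(cpM a hc sU2) submxMr ?hU2.
case/subquotP: (hq Y q (U2 *m g) GY sm) => Z [GZ [h [hc' hs' hk']]].
apply/subquotP; exists Z; split=> //; exists (g *m h); split.
- move=> a; apply/sub_kermxP; rewrite mulmxBr; apply/eqP; rewrite subr_eq0; apply/eqP.
  rewrite !mulmxA (cpM a hc (submx_refl _)).
  by rewrite (cpM a hc' (submx1 (V *m g))).
- by rewrite mulmxA; apply: submx_trans hs' _; apply: submxMr.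
apply/andP; split.
  set K := (V :&: kermx (g *m h))%MS.
  have sKV : (K <= V)%MS by apply: capmxSl.
  have Kgh : K *m g *m h = 0 by rewrite -mulmxA; apply/sub_kermxP/capmxSr.
  have : (K *m g <= U2 *m g)%MS by apply: (kerE hk') => //; apply: submx1.
  case/submxP=> R eR.
  have sD : (K - R *m U2 <= U)%MS.
    apply: (kerE hk); first by rewrite addmx_sub // eqmx_opp (submx_trans _ sU2) ?submxMl.
    by rewrite mulmxBl eR mulmxA subrr.
  have -> : K = (K - R *m U2) + R *m U2 by rewrite subrK.
  by rewrite addmx_sub ?submxMl // (submx_trans sD sU).
rewrite sub_capmx sU2 /=; apply/sub_kermxP.
by rewrite mulmxA (kerUg hk').
Qed.

Lemma eq0mx m1 m2 n : ((0 : 'M[F]_(m1, n)) == (0 : 'M[F]_(m2, n)))%MS.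
Proof. by apply/andP; split; apply: sub0mx. Qed.

Lemma eqrefl m n (A : 'M[F]_(m, n)) : (A == A)%MS.
Proof. by apply/andP. Qed.

Lemma IMG G (hG : torsion_class G) X Z m (V : 'M[F]_(m, mdim X))
  (phi : 'M[F]_(mdim X, mdim Z)) :
  subquot G X V (0 : 'M[F]_(mdim X)) -> submodule V -> cp X Z m V phi ->
  subquot G Z (V *m phi) (0 : 'M[F]_(mdim Z)).
Proof.
move=> hs hV hc.
set U2 := (V :&: kermx phi)%MS.
have hU2 : submodule U2.
  move=> a; rewrite sub_capmx; apply/andP; split.
    exact: submx_trans (submxMr _ (capmxSl _ _)) (hV a).
  apply/sub_kermxP; rewrite (cpM a hc (capmxSl _ _)).
  by rewrite (sub_kermxP (capmxSr _ _)) mul0mx.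
have := Qamb hG hs (sub0mx _ _) (capmxSl _ _) hU2.
move/(TRb hc (eqrefl _) (submx_refl U2) (submx_refl V) hV).
move/sqE; apply; first exact: eqrefl.
by rewrite (sub_kermxP (capmxSr _ _)); apply: eq0mx.
Qed.

Section Res.
Variables (X : module L) (m : nat) (B : 'M[F]_(m, mdim X)).
Hypothesis hB : submodule B.
Let Bb := row_base B.
Let pB := pinvmx Bb.
Definition resact (a : L) : 'M[F]_(\rank B) := Bb *m act X a *m pB.

Lemma Bb_sub : (Bb <= B)%MS. Proof. by rewrite /Bb eq_row_base. Qed.
Lemma sub_Bb k (A : 'M[F]_(k, mdim X)) : (A <= B)%MS -> (A <= Bb)%MS.
Proof. by rewrite /Bb eq_row_base. Qed.
Lemma BbpB : Bb *m pB = 1%:M. Proof. exact: mulmxVp (row_base_free _). Qed.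
Lemma pBK k (A : 'M[F]_(k, mdim X)) : (A <= B)%MS -> A *m pB *m Bb = A.
Proof. by move=> s; apply: mulmxKpV; apply: sub_Bb. Qed.

Lemma resact_lin (c : F) (a b : L) : resact (c *: a + b) = c *: resact a + resact b.
Proof. by rewrite /resact act_linear mulmxDr mulmxDl -scalemxAr -scalemxAl. Qed.

Lemma resact_mul (a b : L) : resact (a * b) = resact a *m resact b.
Proof.
rewrite /resact (mulmxA (Bb *m act X a *m pB)) (mulmxA _ Bb) pBK.
  by rewrite act_mul !mulmxA.
by apply: submx_trans (hB a); apply: submxMr; apply: Bb_sub.
Qed.

Lemma resact_one : resact 1 = 1%:M.
Proof. by rewrite /resact act_one mulmx1 BbpB. Qed.

Definition resmod : module L := @Module F L (\rank B) resact resact_lin resact_mul resact_one.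

Lemma res_cp : cp X resmod m B pB.
Proof.
apply/cpE => a /=; rewrite /resact (mulmxA B pB) (mulmxA (B *m pB) (Bb *m act X a)).
by rewrite (mulmxA (B *m pB) Bb) pBK // mulmxA.
Qed.

Lemma res_surj : (1%:M <= B *m pB)%MS.
Proof. by rewrite -BbpB; apply: submxMr; apply: Bb_sub. Qed.

Lemma res_ker : (B :&: kermx pB == (0 : 'M[F]_(mdim X)))%MS.
Proof.
apply/andP; split; last exact: sub0mx.
have s : (B :&: kermx pB <= B)%MS by apply: capmxSl.
rewrite -(pBK s) (sub_kermxP (capmxSr _ _)) mul0mx; exact: sub0mx.
Qed.

Lemma res_submod k (U : 'M[F]_(k, mdim X)) : submodule U -> (U <= B)%MS ->
  @submodule F L resmod k (U *m pB).
Proof.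
move=> hU sU a /=; rewrite /resact (mulmxA (U *m pB) (Bb *m act X a)).
by rewrite (mulmxA (U *m pB) Bb) pBK // submxMr // hU.
Qed.
End Res.

Lemma Eamb G (hG : torsion_class G) X m1 m2 (B : 'M[F]_(m1, mdim X))
  (U : 'M[F]_(m2, mdim X)) :
  subquot G X B U -> subquot G X U (0 : 'M[F]_(mdim X)) -> submodule B ->
  submodule U -> subquot G X B (0 : 'M[F]_(mdim X)).
Proof.
case: hG => _ _ he hBU hU0 hB hU.
have sU : (U <= B)%MS by case/subquotP: hBU => Y [_ [g [_ _ hk]]]; apply: kerUV hk.
have hc := res_cp hB; have hs := res_surj B; have hk := res_ker B.
have hq1 := TRb hc hk (sub0mx _ _) (submx_refl B) hB hBU.
have hq2 := TRb hc hk (sub0mx _ _) sU hU hU0.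
have GX : G (resmod hB).
  apply: (he (resmod hB) _ (U *m pinvmx (row_base B))).
  - exact: res_submod.
  - by apply: (sqE hq2); [apply: eqrefl | rewrite mul0mx; apply: eq0mx].
  apply: (sqE hq1); last exact: eqrefl.
  by apply/andP; split; [apply: submx1 | apply: hs].
by apply/subquotP; exists (resmod hB); split=> //; exists (pinvmx (row_base B)).
Qed.

Lemma capsub X m1 m2 (A : 'M[F]_(m1, mdim X)) (B : 'M[F]_(m2, mdim X)) :
  submodule A -> submodule B -> submodule (A :&: B)%MS.
Proof.
move=> hA hB a; rewrite sub_capmx; apply/andP; split.
  exact: submx_trans (submxMr _ (capmxSl _ _)) (hA a).
exact: submx_trans (submxMr _ (capmxSr _ _)) (hB a).
Qed.

Lemma sub1G G X : G X -> subobject G X (1%:M : 'M[F]_(mdim X)).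
Proof.
move=> GX; split; first by move=> a; apply: submx1.
apply/subquotP; exists X; split=> //; exists 1%:M; split.
- by move=> a; apply/sub_kermxP; rewrite mul1mx mulmx1 mul1mx subrr.
- by rewrite mulmx1.
rewrite cap1mx.
have : kermx (1%:M : 'M[F]_(mdim X)) == 0 by rewrite kermx_eq0 row_free_unit unitmx1.
by move/eqP=> ->; apply: eq0mx.
Qed.

Lemma V1 G (hG : torsion_class G) d (S : orderType d) (W : S -> module L -> Prop)
  (hW : strict_HN_stratification G W) (M : module L) (su ss : S) (hus : (su < ss)%O)
  (A A' P P' : 'M[F]_(mdim M)) :
  strict_sub G M A -> strict_sub G M A' -> strict_sub G M P -> strict_sub G M P' ->
  (A <= P)%MS -> (A' <= P')%MS -> subquot (W su) M A A' -> subquot (W ss) M P P' ->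
  (A <= P')%MS.
Proof.
case: hW => hpw hz _.
move=> [GM [hAsub hAG] hAstr] [_ [hA'sub hA'G] _] [_ [hPsub hPG] _] [_ [hP'sub hP'G] hP'str].
move=> sAP sAP' /subquotP[Y [WY [gA [cA sA kA]]]] /subquotP[Z [WZ [gP [cP sP kP]]]].
have GY : G Y by case: (hpw su) => _ h _ _ _; apply: h.
have GZ : G Z by case: (hpw ss) => _ h _ _ _; apply: h.
set QA := pinvmx (A *m gA).
set f := QA *m A *m gP.
have A'P : (A' <= kermx gP)%MS by apply: submx_trans sAP' (kerUk kP).
have keyA k (X0 : 'M[F]_(k, mdim M)) : (X0 <= A)%MS -> X0 *m gA *m f = X0 *m gP.
  move=> s; rewrite /f (mulmxA (X0 *m gA) (QA *m A)) (mulmxA (X0 *m gA) QA).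
  exact: (keyid kA A'P s).
have QA1 : QA *m A *m gA = 1%:M.
  by have := mulmxKpV sA; rewrite mul1mx (mulmxA QA A gA).
have VQ k (T : 'M[F]_(k, mdim Y)) : T *m QA *m A *m gA = T.
  by rewrite -(mulmxA (T *m QA)) -(mulmxA T) (mulmxA QA) QA1 mulmx1.
have sQA : (QA *m A <= A)%MS by apply: submxMl.
have homf : forall a, act Y a *m f = f *m act Z a.
  move=> a.
  have sX : (QA *m A *m act M a <= A)%MS.
    by rewrite -mulmxA; apply: mulmx_sub (hAsub a).
  rewrite {2}/f -(cpM a cP (submx_trans sQA sAP)) -(keyA _ _ sX).
  by rewrite (cpM a cA sQA) QA1 mul1mx.
have KB m' (V : 'M[F]_(m', mdim Y)) : subobject G Y V -> subC G Y (kermx f :&: V)%MS.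
  move=> [hV hVG].
  set B := (V *m QA *m A + A')%MS.
  have hBq : subquot G M B A'.
    apply: (sqE (TRf cA sA kA hA'sub hVG)); first exact: eqrefl.
    by rewrite !mul0mx; apply/eqmxP; apply: adds0mx.
  have hBsub : submodule B.
    move=> a; rewrite /B addsmxMr addsmx_sub; apply/andP; split.
      apply: (liftS kA).
        by rewrite -mulmxA; apply: mulmx_sub (hAsub a).
      by rewrite (cpM a cA (submxMl _ _)) VQ hV.
    exact: submx_trans (hA'sub a) (addsmxSr _ _).
  have hBG : subquot G M B (0 : 'M[F]_(mdim M)) := Eamb hG hBq hA'G hBsub hA'sub.
  have hPB := hP'str _ B (conj hBsub hBG).
  have sBA : (B <= A)%MS by rewrite addsmx_sub submxMl (kerUV kA).
  have sPBA : (P' :&: B <= A)%MS := submx_trans (capmxSr _ _) sBA.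
  have := IMG hG hPB (capsub hP'sub hBsub) (cpS cA sPBA).
  move/sqE; apply; last exact: eqrefl.
  apply/andP; split.
    rewrite sub_capmx; apply/andP; split.
      apply/sub_kermxP; rewrite (keyA _ _ sPBA).
      exact/sub_kermxP/(submx_trans (capmxSl _ _) (kerUk kP)).
    apply: (liftG kA); first exact: submx_trans (submx1 _) sA.
    exact: capmxSr.
  set y := (kermx f :&: V)%MS.
  have sx : (y *m QA *m A <= P' :&: B)%MS.
    rewrite sub_capmx; apply/andP; split.
      apply: (kerE kP); first exact: submx_trans (submxMl _ _) sAP.
      rewrite -(keyA _ _ (submxMl _ _)) VQ; exact/sub_kermxP/capmxSl.
    apply: submx_trans (addsmxSl _ _); apply: submxMr; apply: submxMr; exact: capmxSr.
  by rewrite -{1}(VQ _ y); apply: submxMr.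
have IB m' (V : 'M[F]_(m', mdim Z)) : subobject G Z V -> subC G Z (f :&: V)%MS.
  move=> [hV hVG].
  set QP := pinvmx (P *m gP).
  set B := (V *m QP *m P + P')%MS.
  have QP1 : QP *m P *m gP = 1%:M.
    by have := mulmxKpV sP; rewrite mul1mx (mulmxA QP P gP).
  have VQP k (T : 'M[F]_(k, mdim Z)) : T *m QP *m P *m gP = T.
    by rewrite -(mulmxA (T *m QP)) -(mulmxA T) (mulmxA QP) QP1 mulmx1.
  have hBq : subquot G M B P'.
    apply: (sqE (TRf cP sP kP hP'sub hVG)); first exact: eqrefl.
    by rewrite !mul0mx; apply/eqmxP; apply: adds0mx.
  have hBsub : submodule B.
    move=> a; rewrite /B addsmxMr addsmx_sub; apply/andP; split.
      apply: (liftS kP).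
        by rewrite -mulmxA; apply: mulmx_sub (hPsub a).
      by rewrite (cpM a cP (submxMl _ _)) VQP hV.
    exact: submx_trans (hP'sub a) (addsmxSr _ _).
  have hBG : subquot G M B (0 : 'M[F]_(mdim M)) := Eamb hG hBq hP'G hBsub hP'sub.
  have hAB := hAstr _ B (conj hBsub hBG).
  have sABP : (A :&: B <= P)%MS := submx_trans (capmxSl _ _) sAP.
  have := IMG hG hAB (capsub hAsub hBsub) (cpS cP sABP).
  move/sqE; apply; last exact: eqrefl.
  apply/andP; split.
    rewrite sub_capmx; apply/andP; split.
      by rewrite -(keyA _ _ (capmxSl _ _)) submxMl.
    apply: (liftG kP); first exact: submx_trans (submx1 _) sP.
    exact: capmxSr.
  set y := (f :&: V)%MS.
  set R := y *m pinvmx f.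
  have xg : R *m (QA *m A) *m gP = y.
    by rewrite -mulmxA; apply: mulmxKpV; apply: capmxSl.
  have sxA : (R *m (QA *m A) <= A)%MS by apply: mulmx_sub.
  have sx : (R *m (QA *m A) <= A :&: B)%MS.
    rewrite sub_capmx sxA /=; apply: (liftS kP); first exact: submx_trans sxA sAP.
    rewrite xg; exact: capmxSr.
  by rewrite -{1}xg; apply: submxMr.
have f0 : f = 0.
  apply: (hz su ss Y Z f hus WY WZ); split=> //.
    split=> //.
    split.
      move=> a; apply/sub_kermxP; rewrite -mulmxA homf mulmxA.
      by rewrite (sub_kermxP (submx_refl _)) mul0mx.
    apply: (sqE (KB _ _ (sub1G GY))); last exact: eqrefl.
    by rewrite capmx1; apply: eqrefl.
  split=> //.
  split; first by move=> a; rewrite -homf; apply: submxMl.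
  apply: (sqE (IB _ _ (sub1G GZ))); last exact: eqrefl.
  apply/eqmxP; apply: capmxT; by rewrite -sub1mx.
apply: (kerE kP sAP).
by rewrite -(keyA _ _ (submx_refl A)) f0 mulmx0.
Qed.

Lemma chain_dec n0 m (Ms : nat -> 'M[F]_n0) :
  (forall k, (0 < k <= m)%N -> (Ms k <= Ms k.-1)%MS) ->
  forall i j, (i <= j)%N -> (j <= m)%N -> (Ms j <= Ms i)%MS.
Proof.
move=> h i; elim=> [|j IH] hij hjm.
  by have -> : i = 0%N by lia.
case: (ltngtP i j.+1) => [lt|gt|->] //; last by lia.
apply: submx_trans (h j.+1 _) _; first by lia.
by apply: IH; lia.
Qed.

Lemma s_dec d (S : orderType d) m (s : nat -> S) :
  (forall k, (0 < k < m)%N -> (s k.+1 < s k)%O) ->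
  forall i j, (0 < i)%N -> (i < j)%N -> (j <= m)%N -> (s j < s i)%O.
Proof.
move=> h i; elim=> [|j IH] hi hij hjm; first by lia.
case: (ltngtP i j) => [lt|gt|e].
- by apply: (@lt_trans _ _ (s j)); [apply: h | apply: IH]; lia.
- by lia.
- by rewrite -e; apply: h; lia.
Qed.

Lemma vanish G (hG : torsion_class G) d (S : orderType d) (W : S -> module L -> Prop)
  (hW : strict_HN_stratification G W) (M : module L) m Ms s n Ns u k j0 :
  HN_chain G W M m Ms s -> HN_chain G W M n Ns u -> (k < m)%N -> (j0 <= n)%N ->
  (Ns j0 <= Ms k)%MS -> (forall i, (j0 < i <= n)%N -> (u i < s k.+1)%O) ->
  (Ns j0 <= Ms k.+1)%MS.
Proof.
move=> [_ _ Mstr Mq _] [_ hNn Nstr Nq _] hk hj0 sj hu.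
have Ndec := chain_dec (fun k h => (Nq k h).1).
suff H : forall t j, (j0 <= j)%N -> (j + t = n)%N -> (Ns j <= Ms k.+1)%MS.
  by apply: (H (n - j0)%N); lia.
elim=> [|t IH] j hj e.
  rewrite addn0 in e; rewrite e; move/eqmxP: hNn => ->; exact: sub0mx.
have IH' := IH j.+1 (leqW hj) (etrans (addSnnS j t) e).
apply: (V1 hG hW (hu j.+1 _) (P := Ms k)); try by lia.
- apply: Nstr; lia.
- apply: Nstr; lia.
- apply: Mstr; lia.
- apply: Mstr; lia.
- apply: submx_trans sj; apply: Ndec; lia.
- by case: (Nq j.+1 ltac:(lia)).
by case: (Mq k.+1 ltac:(lia)).
Qed.

End Aux.

Ltac keepnat := repeat match goal with
  | H : ?T |- _ =>
     match T with
     | is_true (leq _ _) => fail 1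
     | is_true (_ && _) => fail 1
     | (_ = _ :> nat) => fail 1
     | nat => fail 1
     | _ => clear H
     end
  end.
Ltac nlia := keepnat; lia.

Unset Implicit Arguments.

Theorem mainTheorem19 (F : fieldType) (L : falgType F) (G : module L -> Prop)
    (hG : torsion_class G) (d : Order.disp_t) (S : orderType d)
    (W : S -> module L -> Prop) (hW : strict_HN_stratification G W)
    (M : module L) (hM : G M)
    (m : nat) (Ms : nat -> 'M[F]_(mdim M)) (s : nat -> S)
    (n : nat) (Ns : nat -> 'M[F]_(mdim M)) (u : nat -> S) :
    HN_chain G W M m Ms s ->
    (forall k, (0 < k <= m)%N -> (Ms k < Ms k.-1)%MS) ->
    HN_chain G W M n Ns u ->
    (forall j, (0 < j <= n)%N -> (Ns j < Ns j.-1)%MS) ->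
    m = n /\
    (forall k, (0 < k <= m)%N -> s k = u k) /\
    (forall k, (k <= m)%N -> (Ms k == Ns k)%MS).
Proof.
move=> hM' hMs hN' hNs.
have [hM0 hMm Mstr Mq Msd] := hM'.
have [hN0 hNn Nstr Nq Nsd] := hN'.
have Mdec := chain_dec (fun k h => (Mq k h).1).
have Ndec := chain_dec (fun k h => (Nq k h).1).
have sM := s_dec Msd; have sN := s_dec Nsd.
have Claim : forall k, (k <= m)%N -> (k <= n)%N ->
    (Ms k == Ns k)%MS /\ (forall i, (0 < i <= k)%N -> s i = u i).
  elim=> [|k IH] hkm hkn.
    split; last by move=> i; nlia.
    move/eqmxP: hM0 => e1; move/eqmxP: hN0 => e2.
    by apply/eqmxP; apply: eqmx_trans e1 (eqmx_sym e2).
  have [/andP[eMN eNM] hsu] := IH (ltnW hkm) (ltnW hkn).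
  have stM : ~~ (Ms k <= Ms k.+1)%MS by case/andP: (hMs k.+1 ltac:(nlia)).
  have stN : ~~ (Ns k <= Ns k.+1)%MS by case/andP: (hNs k.+1 ltac:(nlia)).
  have vanN : (forall i, (k < i <= n)%N -> (u i < s k.+1)%O) -> False.
    move=> h; have := vanish hG hW hM' hN' hkm (ltnW hkn) eNM h.
    by move=> s1; move/negP: stM; apply; apply: submx_trans eMN s1.
  have vanM : (forall i, (k < i <= m)%N -> (s i < u k.+1)%O) -> False.
    move=> h; have := vanish hG hW hN' hM' hkn (ltnW hkm) eMN h.
    by move=> s1; move/negP: stN; apply; apply: submx_trans eNM s1.
  have eqsu : s k.+1 = u k.+1.
    case: (ltgtP (s k.+1) (u k.+1)) => // [lt|gt].
      exfalso; apply: vanM => i hi.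
      case: (ltngtP i k.+1) => [a|b|->] //; first by nlia.
      by apply: lt_trans lt; apply: sM; nlia.
    exfalso; apply: vanN => i hi.
    case: (ltngtP i k.+1) => [a|b|->] //; first by nlia.
    by apply: lt_trans gt; apply: sN; nlia.
  split.
    apply/andP; split.
      apply: (vanish hG hW hN' hM' hkn hkm).
        by apply: submx_trans eMN; apply: Mdec; nlia.
      by move=> i hi; rewrite -eqsu; apply: sM; nlia.
    apply: (vanish hG hW hM' hN' hkm hkn).
      by apply: submx_trans eNM; apply: Ndec; nlia.
    by move=> i hi; rewrite eqsu; apply: sN; nlia.
  move=> i hi; case: (ltngtP i k.+1) => [a|b|->] //; last by nlia.
  by apply: hsu; nlia.
have mn : m = n.
  case: (ltngtP m n) => // [lt|gt].
    have [/andP[_ eNM] _] := Claim m (leqnn m) (ltnW lt).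
    have : (Ns m <= Ns m.+1)%MS.
      apply: submx_trans eNM _; apply: (submx_trans (B := (0 : 'M[F]_(mdim M)))); [by case/andP: hMm | exact: sub0mx].
    by case/andP: (hNs m.+1 ltac:(nlia)) => _ /negP.
  have [/andP[eMN _] _] := Claim n (ltnW gt) (leqnn n).
  have : (Ms n <= Ms n.+1)%MS.
    apply: submx_trans eMN _; apply: (submx_trans (B := (0 : 'M[F]_(mdim M)))); [by case/andP: hNn | exact: sub0mx].
  by case/andP: (hMs n.+1 ltac:(nlia)) => _ /negP.
subst n; split=> //; split.
  by move=> k hk; apply: (Claim k ltac:(nlia) ltac:(nlia)).2; nlia.
by move=> k hk; apply: (Claim k hk hk).1.
Qed.
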